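(* For every $0<\alpha\le 1$ there exist $n$, $m$, a preference profile $\sigma$ on $n$ voters and $m$ alternatives, and two distributions $\mathcal{D}_1,\mathcal{D}_2$ both supported on $[0,1]$ such that no alternative $j\in A$ satisfies both $\mathbb{E}_{\mathcal{D}_1}[\mathrm{sw}(j,u)]\ge\alpha\max_{k\in A}\mathbb{E}_{\mathcal{D}_1}[\mathrm{sw}(k,u)]$ and $\mathbb{E}_{\mathcal{D}_2}[\mathrm{sw}(j,u)]\ge\alpha\max_{k\in A}\mathbb{E}_{\mathcal{D}_2}[\mathrm{sw}(k,u)]$.
   Context: There are $n$ voters and $m$ alternatives $A=\{1,\dots,m\}$. A preference profile $\sigma$ consists of a ranking of $A$ for each voter. Given a distribution $\mathcal{D}$ and profile $\sigma$, a random utility profile $u$ consistent with $\sigma$ is generated as follows: independently for each voter $i$, draw $m$ i.i.d. samples from $\mathcal{D}$ and assign them, from highest to lowest, to the alternatives in the order of voter $i$'s ranking. The social welfare of $j$ is $\mathrm{sw}(j,u)=\sum_i u_{ij}$; $\mathbb{E}_{\mathcal{D}}$ denotes expectation over $u$ generated with distribution $\mathcal{D}$. *)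

(* Defs.v *)
From HB Require Import structures.
From mathcomp Require Import all_boot all_order all_algebra all_fingroup.
From mathcomp Require Import all_classical all_reals all_analysis.

Set Implicit Arguments.
Unset Strict Implicit.
Unset Printing Implicit Defensive.

Import Order.TTheory GRing.Theory Num.Theory.
Local Open Scope ring_scope.
Local Open Scope ereal_scope.
Local Open Scope classical_set_scope.

(* Iterated integral of F over k i.i.d. samples drawn from the distribution P:
   iter_int P k F = \int[P]_x1 ... \int[P]_xk F [:: x1; ...; xk]
   (the expectation of F under the k-fold product distribution P^k). *)
Fixpoint iter_int (R : realType) (P : probability R R) (k : nat)
    (F : seq R -> \bar R) : \bar R :=
  match k with
  | 0 => F [::]
  | k'.+1 => \int[P]_x iter_int P k' (fun s => F (x :: s))
  end.

(* A preference profile on n voters and m alternatives: for each voter i,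
   a ranking of 'I_m given as the permutation  j |-> position of j  in
   voter i's ranking (position 0 = most preferred). *)
Definition profile (n m : nat) := 'I_n -> {perm 'I_m}.

(* The sample sequence s has n*m entries; voter i uses the block
   s_{i*m}, ..., s_{i*m+m-1}.  Sorted from highest to lowest, the value at
   position r goes to the alternative ranked r-th by voter i. *)
Definition utility (R : realType) (n m : nat) (sigma : profile n m)
    (s : seq R) (i : 'I_n) (j : 'I_m) : R :=
  nth 0%R (sort (fun x y : R => (y <= x)%R) (take m (drop (i * m) s)))
      (sigma i j).

Definition sw (R : realType) (n m : nat) (sigma : profile n m)
    (j : 'I_m) (s : seq R) : R :=
  (\sum_(i < n) utility sigma s i j)%R.

Definition exp_sw (R : realType) (D : probability R R) (n m : nat)
    (sigma : profile n m) (j : 'I_m) : \bar R :=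
  iter_int D (n * m) (fun s => (sw sigma j s)%:E).

Definition max_exp_sw (R : realType) (D : probability R R) (n m : nat)
    (sigma : profile n m) : \bar R :=
  \big[maxe/-oo]_(k < m) exp_sw D sigma k.

Definition supported01 (R : realType) (D : probability R R) : Prop :=
  D [set` `[0%R, 1%R]] = 1.

(* Main.v *)
Require Import Defs.
From HB Require Import structures.
From mathcomp Require Import all_boot all_order all_algebra all_fingroup.
From mathcomp Require Import all_classical all_reals all_analysis.
From mathcomp Require Import ring lra measurable_realfun.

Set Implicit Arguments.
Unset Strict Implicit.
Unset Printing Implicit Defensive.
Import Order.TTheory GRing.Theory Num.Theory.
Import numFieldNormedType.Exports.
Local Open Scope classical_set_scope.
Local Open Scope ring_scope.

Section bm.
Context {R : realType} (p : {i01 R}).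

Definition bm : set R -> \bar R :=
  measure_add (mscale (p%:num)%:nng (@dirac _ R 1%R R))
              (mscale (1 - p%:num)%:nng (@dirac _ R 0%R R)).

HB.instance Definition _ := Measure.on bm.

Let bm_setT : bm setT = 1%E.
Proof.
rewrite /bm measure_addE /= /mscale /= !diracE !in_setT /= !mule1 -EFinD.
by congr (_%:E); rewrite addrC subrK.
Qed.

HB.instance Definition _ := @Measure_isProbability.Build _ _ R bm bm_setT.

Import HBNNSimple.

Lemma bm_nnsfun (h : {nnsfun R >-> R}) :
  (\int[bm]_x (h x)%:E = (p%:num * h 1 + (1 - p%:num) * h 0)%:E)%E.
Proof.
have mh : measurable_fun [set: R] (EFin \o h) by exact/measurable_EFinP.
have h0 : forall x, setT x -> (0 <= (h x)%:E)%E by move=> x _; rewrite lee_fin.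
rewrite /bm ge0_integral_measure_add//.
rewrite !ge0_integral_mscale//.
rewrite !integral_dirac//.
by rewrite !diracE !in_setT /= !mul1e -!EFinM -EFinD.
Qed.


Lemma bm_ge0 (f : R -> R) : (forall x, 0 <= f x) ->
  (\int[bm]_x (f x)%:E = (p%:num * f 1 + (1 - p%:num) * f 0)%:E)%E.
Proof.
move=> f0.
have p0 : 0 <= p%:num by [].
have p1 : p%:num <= 1 by [].
rewrite ge0_integralTE; last by move=> x; rewrite lee_fin.
apply/eqP; rewrite eq_le; apply/andP; split.
  apply: ge_ereal_sup => _ [h hf <-].
  rewrite -integralT_nnsfun bm_nnsfun lee_fin.
  have := hf 1; have := hf 0; rewrite !lee_fin => h0 h1.
  by rewrite lerD// ler_wpM2l// subr_ge0.
apply: ereal_sup_ubound.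
pose hh := add_nnsfun (scale_nnsfun (indic_nnsfun R (measurable_set1 (1:R))) (f0 1))
                      (scale_nnsfun (indic_nnsfun R (measurable_set1 (0:R))) (f0 0)).
have hhE x : hh x = f 1 * (x == 1)%:R + f 0 * (x == 0)%:R.
  rewrite /hh /= /mindic !indicE.
  have E a : (x \in [set a]) = (x == a).
    by apply/idP/eqP => [/set_mem|->] //; exact: mem_set.
  by rewrite !E.
exists hh.
  move=> x; rewrite hhE lee_fin.
  have [->|x1] := eqVneq x 1.
    by rewrite oner_eq0 mulr1 mulr0 addr0.
  have [->|x0] := eqVneq x 0.
    by rewrite mulr1 mulr0 add0r.
  by rewrite !mulr0 addr0.
rewrite -integralT_nnsfun bm_nnsfun !hhE !eqxx oner_eq0 eq_sym oner_eq0.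
by rewrite !mulr1 !mulr0 addr0 add0r.
Qed.

Lemma bm_int (g : R -> R) :
  (\int[bm]_x (g x)%:E = (p%:num * g 1 + (1 - p%:num) * g 0)%:E)%E.
Proof.
rewrite integralE.
have -> : (fun x => ((fun y => (g y)%:E)^\+ x))%E = (fun x => (Num.max (g x) 0)%:E).
  by apply/funext => x; rewrite funeposE EFin_max.
have -> : (fun x => ((fun y => (g y)%:E)^\- x))%E = (fun x => (Num.max (- g x) 0)%:E).
  by apply/funext => x; rewrite funenegE EFin_max.
rewrite !bm_ge0; try by move=> x; rewrite le_max lexx orbT.
rewrite -EFinB; congr (_%:E).
have H (a : R) : Num.max a 0 - Num.max (- a) 0 = a.
  have [a0|a0] := lerP 0 a.
    have a1 : - a <= 0 by rewrite oppr_le0.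
    by rewrite (max_idPr a1) subr0.
  have a1 : 0 <= - a by rewrite oppr_ge0 ltW.
  by rewrite (max_idPl a1) sub0r opprK.
rewrite -[in RHS](H (g 1)) -[in RHS](H (g 0)). ring.
Qed.

End bm.

Section Ex.
Context {R : realType} (p : R).

Fixpoint Ex (k : nat) (G : seq R -> R) : R :=
  match k with
  | 0 => G [::]
  | k'.+1 => p * Ex k' (fun s => G (1 :: s)) + (1 - p) * Ex k' (fun s => G (0 :: s))
  end.

Definition all01 (s : seq R) := all (fun x => (x == 0) || (x == 1)) s.

Lemma Ex_ext k (G1 G2 : seq R -> R) :
  (forall s, size s = k -> all01 s -> G1 s = G2 s) -> Ex k G1 = Ex k G2.
Proof.
elim: k G1 G2 => [|k IH] G1 G2 H /=; first exact: H.
congr (_ * _ + _ * _); apply: IH => s Hs H01; apply: H => /=; rewrite ?Hs //.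
  by rewrite /all01 /= eqxx orbT.
by rewrite /all01 /= eqxx.
Qed.

Lemma Ex_cst k c : Ex k (fun _ => c) = c.
Proof. by elim: k c => [|k IH] c //=; rewrite !IH; ring. Qed.

Lemma Ex_add k (G1 G2 : seq R -> R) :
  Ex k (fun s => G1 s + G2 s) = Ex k G1 + Ex k G2.
Proof.
by elim: k G1 G2 => [|k IH] G1 G2 //=; rewrite !IH; ring.
Qed.

Lemma Ex_sum n k (G : 'I_n -> seq R -> R) :
  Ex k (fun s => \sum_(i < n) G i s) = \sum_(i < n) Ex k (G i).
Proof.
elim: n G => [|n IHn] G.
  by rewrite big_ord0 (Ex_ext (G2 := fun _ => 0)) ?Ex_cst // => s _ _; rewrite big_ord0.
rewrite big_ord_recr /= -IHn -Ex_add; apply: Ex_ext => s _ _.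
by rewrite big_ord_recr.
Qed.

Lemma Ex_drop a k (G : seq R -> R) :
  Ex (a + k) (fun s => G (drop a s)) = Ex k G.
Proof.
elim: a G => [|a IH] G.
  by rewrite add0n; apply: Ex_ext => s _ _; rewrite drop0.
rewrite addSn /=.
rewrite IH; ring.
Qed.

Lemma Ex_take k b (G : seq R -> R) :
  Ex (k + b) (fun s => G (take k s)) = Ex k G.
Proof.
elim: k G => [|k IH] G.
  by rewrite add0n /= (Ex_ext (G2 := fun _ => G [::])) ?Ex_cst // => s _ _; rewrite take0.
rewrite addSn /=.
by rewrite (IH (fun s => G (1 :: s))) (IH (fun s => G (0 :: s))).
Qed.

Lemma Ex_block n m (i : nat) (G : seq R -> R) : (i < n)%N ->
  Ex (n * m) (fun s => G (take m (drop (i * m) s))) = Ex m G.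
Proof.
move=> ilt.
have -> : (n * m = i * m + (m + (n - i.+1) * m))%N.
  by rewrite addnA -mulSnr -mulnDl subnKC.
by rewrite (Ex_drop (i * m) _ (fun t => G (take m t))) Ex_take.
Qed.

Hypothesis p01 : 0 <= p <= 1.

Lemma Ex_le k (G1 G2 : seq R -> R) :
  (forall s, size s = k -> all01 s -> G1 s <= G2 s) -> Ex k G1 <= Ex k G2.
Proof.
case/andP: p01 => p0 p1.
elim: k G1 G2 => [|k IH] G1 G2 H /=; first exact: H.
apply: lerD; apply: ler_wpM2l; rewrite ?subr_ge0 //; apply: IH => s Hs H01;
  apply: H => /=; rewrite ?Hs //.
  by rewrite /all01 /= eqxx orbT.
by rewrite /all01 /= eqxx.
Qed.

End Ex.

Section Sort01.
Context {R : realType}.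

Definition geR := (fun x y : R => (y <= x)%R).
Definition cnt1 (s : seq R) := count (fun x => x == 1) s.

Lemma geR_trans : transitive geR.
Proof. by move=> x y z; rewrite /geR => h1 h2; apply: le_trans h2 h1. Qed.

Lemma sorted_ge_10 c d : sorted geR (nseq c 1 ++ nseq d 0).
Proof.
elim: c => [|c IH] /=.
  elim: d => [|d IHd] //=.
  by rewrite (path_sortedE geR_trans) IHd andbT all_nseq /geR lexx orbT.
rewrite (path_sortedE geR_trans) IH andbT all_cat !all_nseq /geR lexx ler01.
by rewrite !orbT.
Qed.

Lemma perm_01 (s : seq R) : all01 s ->
  perm_eq s (nseq (cnt1 s) 1 ++ nseq (size s - cnt1 s) 0).
Proof.
elim: s => [|x s IH] //= /andP[/orP[]/eqP-> H]; have := IH H => {}IH.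
  rewrite eq_sym oner_eq0 add0n subSn ?count_size //=.
  have -> : nseq (cnt1 s) 1 ++ 0 :: nseq (size s - cnt1 s) 0 =
            nseq (cnt1 s) 1 ++ [:: 0] ++ nseq (size s - cnt1 s) 0 by [].
  by rewrite perm_sym perm_catCA /= perm_cons perm_sym.
by rewrite eqxx add1n subSS /= perm_cons.
Qed.

Lemma sort01 (s : seq R) : all01 s ->
  sort geR s = nseq (cnt1 s) 1 ++ nseq (size s - cnt1 s) 0.
Proof.
move=> H; apply: (sorted_eq (leT := geR)).
- by move=> x y z; rewrite /geR => h1 h2; apply: le_trans h2 h1.
- by move=> x y /andP[h1 h2]; apply/le_anti; rewrite /geR in h1 h2; rewrite h1 h2.
- by apply: sort_sorted => x y; rewrite /geR le_total.
- exact: sorted_ge_10.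
- by rewrite perm_sort; exact: perm_01.
Qed.

Lemma nth_sort01 (s : seq R) r : all01 s ->
  nth 0 (sort geR s) r = if (r < cnt1 s)%N then 1 else 0.
Proof.
move=> H; rewrite sort01 // nth_cat size_nseq.
case: ifP => h; first by rewrite nth_nseq h.
by rewrite nth_nseq; case: ifP.
Qed.

End Sort01.

Section QB.
Context {R : realType} (p : R).
Hypothesis p01 : 0 <= p <= 1.

Definition Q j m := Ex p m (fun t : seq R => if (j <= cnt1 t)%N then 1 else 0).

Lemma Q0 m : Q 0 m = 1.
Proof. by rewrite /Q; transitivity (Ex p m (fun _ => 1)); [apply: Ex_ext|rewrite Ex_cst]. Qed.

Lemma QS0 j : Q j.+1 0 = 0.
Proof. by []. Qed.

Lemma QSS j m : Q j.+1 m.+1 = p * Q j m + (1 - p) * Q j.+1 m.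
Proof.
rewrite /Q /=; congr (_ * _ + _ * _); apply: Ex_ext => s _ _.
  by rewrite /cnt1 /= eqxx.
by rewrite /cnt1 /= eq_sym oner_eq0.
Qed.

Lemma Q_ge0 j m : 0 <= Q j m.
Proof.
apply: (@le_trans _ _ (Ex p m (fun _ => 0))); first by rewrite Ex_cst.
by apply: Ex_le => // s _ _; case: ifP.
Qed.

Lemma Q_anti j j' m : (j <= j')%N -> Q j' m <= Q j m.
Proof.
move=> jj; apply: Ex_le => // s _ _.
case: ifP => h; last by case: ifP.
by rewrite (leq_trans jj h).
Qed.

Lemma U1 m : Q 1 m <= m%:R * p.
Proof.
case/andP: p01 => p0 p1.
elim: m => [|m IH]; first by rewrite QS0 mul0r.
rewrite QSS Q0 -natr1.
have := Q_ge0 1 m; nra.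
Qed.

Lemma U2 m : Q 2 m <= (m%:R * p) ^+ 2 / 2.
Proof.
case/andP: p01 => p0 p1.
elim: m => [|m IH]; first by rewrite QS0 mul0r expr0n /= mul0r.
rewrite QSS -natr1.
have := Q_ge0 2 m; have := U1 m; have : 0 <= m%:R :> R by [].
nra.
Qed.

Lemma U3 m : Q 3 m <= (m%:R * p) ^+ 3 / 6.
Proof.
case/andP: p01 => p0 p1.
elim: m => [|m IH]; first by rewrite QS0 mul0r expr0n /= mul0r.
rewrite QSS -natr1.
have M0 : 0 <= m%:R :> R by [].
have h1 : p * Q 2 m <= p * ((m%:R * p) ^+ 2 / 2) by rewrite ler_wpM2l // U2.
have h2 : (1 - p) * Q 3 m <= Q 3 m by have := Q_ge0 3 m; nra.
have h3 : 0 <= p ^+ 3 * (3 * m%:R + 1) by rewrite mulr_ge0 // ?exprn_ge0 //; lra.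
nra.
Qed.

Lemma L1 m : m%:R * p * (1 - m%:R * p) <= Q 1 m.
Proof.
case/andP: p01 => p0 p1.
elim: m => [|m IH]; first by rewrite QS0 !mul0r.
rewrite QSS Q0 -natr1.
have : 0 <= m%:R :> R by [].
nra.
Qed.

Lemma L2 m : m%:R * (m%:R - 1) / 2 * p ^+ 2 * (1 - m%:R * p) <= Q 2 m.
Proof.
case/andP: p01 => p0 p1.
elim: m => [|m IH]; first by rewrite QS0 !mul0r.
rewrite QSS -natr1.
have M0 : 0 <= m%:R :> R by [].
have c0 : 0 <= m%:R * (m%:R - 1) :> R.
  case: m {IH M0} => [|m]; first by rewrite mul0r.
  by rewrite mulr_ge0 // -natr1 addrK.
have h1 : p * (m%:R * p * (1 - m%:R * p)) <= p * Q 1 m by rewrite ler_wpM2l // L1.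
have h2 : (1 - p) * (m%:R * (m%:R - 1) / 2 * p ^+ 2 * (1 - m%:R * p)) <= (1 - p) * Q 2 m.
  by rewrite ler_wpM2l // subr_ge0.
have h3 : 0 <= p ^+ 3 * (m%:R + m%:R * (m%:R - 1) / 2 * m%:R * p).
  have c2 : 0 <= m%:R * (m%:R - 1) / 2 :> R by rewrite divr_ge0.
  by rewrite mulr_ge0 ?exprn_ge0 // addr_ge0 // mulr_ge0 // mulr_ge0.
nra.
Qed.

End QB.

Section Arith.
Context {R : realType}.

Lemma D1_arith (M a p Q1 Q2 : R) : 1 <= M -> 0 < a -> a <= 1 ->
  p = a / (2 * M ^+ 2) -> Q2 <= (M * p) ^+ 2 / 2 ->
  M * p * (1 - M * p) <= Q1 -> 0 <= Q2 -> (M - 1) * Q2 < a * Q1.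
Proof.
move=> M1 a0 a1 -> hQ2 hQ1 Q20.
have M0 : M != 0 by apply/eqP => M0; rewrite M0 in M1; lra.
set u := M * (a / (2 * M ^+ 2)) in hQ2 hQ1 *.
have hu : u = a / (2 * M) by rewrite /u; field; rewrite M0.
have hMu : M * u = a / 2 by rewrite hu; field.
have u0 : 0 < u by rewrite hu divr_gt0 //; lra.
have u1 : u <= 1 / 2.
  rewrite hu ler_pdivrMr; last lra.
  nra.
have e1 : (M - 1) * Q2 <= M * (u ^+ 2 / 2) by nra.
have e2 : M * (u ^+ 2 / 2) = u * (a / 2) / 2 by rewrite -hMu; ring.
have e3 : u * a / 2 <= a * Q1 by nra.
have ua : 0 < u * a by rewrite mulr_gt0.
lra.
Qed.

Lemma D2_arith (M a p Q1 Q2 Q3 : R) : 2 <= M -> 0 < a -> a <= 1 ->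
  192 < M * a ^+ 2 -> p = a / (8 * M) ->
  Q1 <= M * p -> Q3 <= (M * p) ^+ 3 / 6 -> 0 <= Q3 ->
  M * (M - 1) / 2 * p ^+ 2 * (1 - M * p) <= Q2 ->
  Q1 + (M - 1) * Q3 < a * ((M - 1) * Q2).
Proof.
move=> M2 a0 a1 Ma hp hQ1 hQ3 Q30 hQ2.
have M0 : M != 0 by apply/eqP => M0; rewrite M0 in M2; lra.
have hx : M * p = a / 8 by rewrite hp; field.
rewrite hx in hQ1 hQ3 hQ2.
have e1 : (M - 1) * Q3 <= M * ((a / 8) ^+ 3 / 6) by nra.
set T := M * (M - 1) / 2 * p ^+ 2 * (1 - a / 8) in hQ2.
have eT : M * (T * (M - 1)) = (M - 1) ^+ 2 * (M * p) ^+ 2 * (1 - a / 8) / 2.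
  by rewrite /T; ring.
rewrite hx in eT.
have f1 : M ^+ 2 * (a / 8) ^+ 2 / 16 <= (M - 1) ^+ 2 * (a / 8) ^+ 2 * (1 - a / 8) / 2.
  have g1 : M ^+ 2 <= 4 * (M - 1) ^+ 2 by nra.
  have g2 : 0 <= (a / 8) ^+ 2 by rewrite exprn_ge0 // divr_ge0 //; lra.
  nra.
have f2 : M * (a / 8) ^+ 2 / 16 <= T * (M - 1).
  have Mpos : 0 < M by lra.
  rewrite -(ler_pM2l Mpos) eT; nra.
have f3 : a * (M * (a / 8) ^+ 2 / 16) <= a * ((M - 1) * Q2).
  apply: ler_wpM2l; first lra.
  apply: le_trans f2 _; rewrite mulrC; apply: ler_wpM2l => //; lra.
have h : 0 < a * (M * a ^+ 2 - 192) by rewrite mulr_gt0 // subr_gt0.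
lra.
Qed.

End Arith.

Section Main.
Context {R : realType}.
Local Open Scope ereal_scope.

Lemma iter_int_Ex (p : {i01 R}) k (G : seq R -> R) :
  iter_int (bm p) k (fun s => (G s)%:E) = (Ex p%:num k G)%:E.
Proof.
elim: k G => [|k IH] G //=.
rewrite (eq_integral (fun x => (Ex p%:num k (fun s => G (x :: s)))%:E)); last first.
  by move=> x _; exact: (IH (fun s => G (x :: s))).
by rewrite bm_int.
Qed.

Lemma exp_sw_Ex (p : {i01 R}) n m (sigma : profile n m) j :
  exp_sw (bm p) sigma j = (\sum_(i < n) Q p%:num (sigma i j).+1 m)%:E.
Proof.
rewrite /exp_sw iter_int_Ex; congr (_%:E).
rewrite /sw Ex_sum; apply: eq_bigr => i _.
transitivity (Ex p%:num (n * m)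
   (fun s => (fun t => nth 0%R (sort geR t) (sigma i j)) (take m (drop (i * m) s)))).
  by [].
rewrite (@Ex_block _ p%:num n m i (fun t => nth 0%R (sort geR t) (sigma i j)) (ltn_ord i)).
apply: Ex_ext => s _ H.
by rewrite nth_sort01.
Qed.

Lemma bm_supp (p : {i01 R}) : supported01 (bm p).
Proof.
rewrite /supported01 /= /bm measure_addE /= /mscale /= !diracE.
rewrite !mem_set /=; last 2 first.
- by apply: mem_set; rewrite /= in_itv /= lexx ler01.
- by apply: mem_set; rewrite /= in_itv /= lexx ler01.
rewrite !mule1 -EFinD; congr (_%:E).
by change (p%:num + (1 - p%:num) = 1)%R; rewrite addrC subrK.
Qed.

End Main.

Section Profile.
Variable k : nat.
Hypothesis k2 : (2 <= k)%N.

Definition one : 'I_k.+1 := inord 1.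
Definition sig (i : 'I_k) : {perm 'I_k.+1} :=
  (tperm one (lift ord0 i) * tperm ord0 one)%g.

Lemma one_val : (one : nat) = 1%N.
Proof. by rewrite /one inordK // ltnS (leq_trans _ k2). Qed.

Lemma one_neq0 : one != ord0.
Proof. by apply/eqP => /(congr1 val); rewrite /= one_val. Qed.

Lemma sig_b i : sig i ord0 = one.
Proof.
have h : tperm one (lift ord0 i) ord0 = ord0.
  by rewrite tpermD // ?one_neq0 // eq_sym neq_lift.
by rewrite /sig permM h tpermL.
Qed.

Lemma sig_c i : sig i (lift ord0 i) = ord0.
Proof. by rewrite /sig permM tpermR tpermR. Qed.

Lemma sig_other i i0 : i != i0 -> (2 <= sig i (lift ord0 i0))%N.
Proof.
move=> ii0.
have h1 : sig i (lift ord0 i0) != ord0.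
  apply/eqP => h; move/eqP: ii0; apply.
  apply: (@lift_inj _ ord0); apply: (@perm_inj _ (sig i)); by rewrite h sig_c.
have h2 : sig i (lift ord0 i0) != one.
  apply/eqP => h.
  have : lift ord0 i0 = ord0 by apply: (@perm_inj _ (sig i)); rewrite h sig_b.
  by move/eqP; rewrite eq_sym (negbTE (neq_lift _ _)).
set v := sig i (lift ord0 i0) in h1 h2 *.
rewrite leqNgt; apply/negP => lt2.
have [v0|v1] : (nat_of_ord v = 0 \/ nat_of_ord v = 1)%N.
  by move: lt2; case: (nat_of_ord v) => [|[|n]] //= _; auto.
- by move/eqP: h1; apply; apply/val_inj.
- by move/eqP: h2; apply; apply/val_inj; rewrite /= v1 one_val.
Qed.

Context {R : realType} (p : R).
Hypothesis p01 : (0 <= p <= 1)%R.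
Local Open Scope ring_scope.

Lemma Eb : \sum_(i < k) Q p (sig i ord0).+1 k.+1 = k%:R * Q p 2 k.+1.
Proof.
under eq_bigr => i _ do rewrite sig_b one_val.
by rewrite sumr_const card_ord mulr_natl.
Qed.

Lemma Ec_lo i0 : Q p 1 k.+1 <= \sum_(i < k) Q p (sig i (lift ord0 i0)).+1 k.+1.
Proof.
rewrite (bigD1 i0) //= sig_c /= lerDl.
by apply: sumr_ge0 => i _; exact: Q_ge0.
Qed.

Lemma Ec_up i0 : \sum_(i < k) Q p (sig i (lift ord0 i0)).+1 k.+1 <=
  Q p 1 k.+1 + k%:R * Q p 3 k.+1.
Proof.
rewrite (bigD1 i0) //= sig_c /= lerD2l.
apply: (@le_trans _ _ (\sum_(i < k | i != i0) Q p 3 k.+1)).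
  apply: ler_sum => i ii0; apply: Q_anti => //.
  by rewrite ltnS sig_other.
have := Q_ge0 p01 3 k.+1 => Q30.
have -> : k%:R * Q p 3 k.+1 = \sum_(i < k) Q p 3 k.+1.
  by rewrite sumr_const card_ord mulr_natl.
by rewrite [X in _ <= X](bigD1 i0) //= lerDr.
Qed.

End Profile.


Local Open Scope ereal_scope.

Theorem theorem4 (R : realType) (alpha : R) :
  (0 < alpha <= 1)%R ->
  exists (n m : nat) (sigma : profile n m) (D1 D2 : probability R R),
    (0 < n)%N /\ (0 < m)%N /\ supported01 D1 /\ supported01 D2 /\
    ~ (exists j : 'I_m,
          exp_sw D1 sigma j >= alpha%:E * max_exp_sw D1 sigma /\
          exp_sw D2 sigma j >= alpha%:E * max_exp_sw D2 sigma).
Proof.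
Local Open Scope ring_scope.
move=> /andP[a0 a1].
pose t := Num.Def.trunc (192 / alpha ^+ 2).
pose k := t.+2.
have k2 : (2 <= k)%N by [].
pose M : R := k.+1%:R.
have M2 : 2 <= M by rewrite /M ler_nat.
have Mbig : 192 < M * alpha ^+ 2.
  have h := truncnS_gt (192 / alpha ^+ 2).
  have a2 : 0 < alpha ^+ 2 by rewrite exprn_gt0.
  have : 192 / alpha ^+ 2 < M.
    apply: (lt_le_trans h); rewrite /M ler_nat /k; exact: leq_trans (leqnSn _) (leqnSn _).
  by rewrite ltr_pdivrMr.
pose p1 := alpha / (2 * M ^+ 2).
pose p2 := alpha / (8 * M).
have Mpos : 0 < M by lra.
have p10 : 0 <= p1 by rewrite /p1 divr_ge0 //; [lra | rewrite mulr_ge0 // exprn_ge0 //; lra].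
have p11 : p1 <= 1.
  rewrite /p1 ler_pdivrMr; last by rewrite mulr_gt0 // exprn_gt0.
  nra.
have p20 : 0 <= p2 by rewrite /p2 divr_ge0 //; lra.
have p21 : p2 <= 1 by rewrite /p2 ler_pdivrMr; nra.
pose P1 : {i01 R} := Itv01 p10 p11.
pose P2 : {i01 R} := Itv01 p20 p21.
have p1b : 0 <= p1 <= 1 by rewrite p10 p11.
have p2b : 0 <= p2 <= 1 by rewrite p20 p21.
pose sg : profile k k.+1 := fun i => sig i.
exists k, k.+1, sg, (bm P1), (bm P2).
split; first by []. split; first by [].
split; first exact: bm_supp. split; first exact: bm_supp.
move=> [j [H1 H2]].
have kM : k%:R = M - 1 by rewrite /M -natr1 addrK.
case: (unliftP ord0 j) => [i0 ->|->] in H1 H2.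
-
  have Eb2 : (exp_sw (bm P2) sg ord0 <= max_exp_sw (bm P2) sg)%E.
    by rewrite /max_exp_sw; apply: le_bigmax.
  have : (alpha%:E * exp_sw (bm P2) sg ord0 <=
          exp_sw (bm P2) sg (lift ord0 i0))%E.
    apply: le_trans H2; apply: lee_pmul => //; first by rewrite lee_fin; lra.
    rewrite exp_sw_Ex lee_fin; apply: sumr_ge0 => i _; exact: Q_ge0.
  rewrite !exp_sw_Ex /sg /= (Eb k2 p2) -EFinM lee_fin => H.
  have := Ec_up k2 p2b i0 => Hu.
  have := D2_arith M2 a0 a1 Mbig (erefl p2) (U1 p2b k.+1) (U3 p2b k.+1)
           (Q_ge0 p2b 3 k.+1) (L2 p2b k.+1).
  rewrite -kM => Hlt.
  have : alpha * (k%:R * Q p2 2 k.+1) <= Q p2 1 k.+1 + k%:R * Q p2 3 k.+1.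
    exact: le_trans H Hu.
  lra.
-
  pose i0 : 'I_k := ord0.
  have Ec1 : (exp_sw (bm P1) sg (lift ord0 i0) <= max_exp_sw (bm P1) sg)%E.
    by rewrite /max_exp_sw; apply: le_bigmax.
  have : (alpha%:E * exp_sw (bm P1) sg (lift ord0 i0) <=
          exp_sw (bm P1) sg ord0)%E.
    apply: le_trans H1; apply: lee_pmul => //; first by rewrite lee_fin; lra.
    rewrite exp_sw_Ex lee_fin; apply: sumr_ge0 => i _; exact: Q_ge0.
  rewrite !exp_sw_Ex /sg /= (Eb k2 p1) -EFinM lee_fin => H.
  have := Ec_lo p1b i0 => Hl.
  have M1 : 1 <= M by lra.
  have := D1_arith M1 a0 a1 (erefl p1)
           (U2 p1b k.+1) (L1 p1b k.+1) (Q_ge0 p1b 2 k.+1).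
  rewrite -kM => Hlt.
  have : alpha * Q p1 1 k.+1 <= k%:R * Q p1 2 k.+1.
    apply: le_trans H; apply: ler_wpM2l => //; lra.
  lra.
Qed.
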